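(* Let $G=(V=[n],w)$ be a connected weighted graph. Then the fractional Cheeger constant $\tilde h_G$ is attained: there is a fractional partition $(\rho,\eta)$ of $V$ with $\|\rho\|\ne0$, $\|\eta\|\ne0$ and $\tilde h(G;\rho,\eta)=\tilde h_G$.
   Context: A weighted graph is a pair $(V,w)$ with $V=[n]=\{1,\dots,n\}$ and $w:V\times V\to[0,1]$ symmetric. It is loopless if $w(v,v)=0$ for all $v$. Put $\mathrm{vol}(v)=\sum_{u\in V}w(u,v)$ and $\mathrm{vol}(G)=\sum_v\mathrm{vol}(v)$. $G$ is connected if $\sum_{u\in S,v\notin S}w(u,v)>0$ for every $\emptyset\ne S\subsetneq V$. A fractional partition of $V$ is a pair $(\rho,\eta)$ of functions $V\to[0,1]$ with $\rho(u)+\eta(u)=1$ for all $u$; write $\|\rho\|=\sum_u\rho(u)\mathrm{vol}(u)$, $\|\eta\|=\sum_u\eta(u)\mathrm{vol}(u)$. When both are nonzero, $\tilde h(G;\rho,\eta)=\frac{\sum_{u,v\in V}\rho(u)\eta(v)w(u,v)}{\min\{\|\rho\|,\|\eta\|\}}$, and the fractional Cheeger constant is $\tilde h_G=\inf_{(\rho,\eta)}\tilde h(G;\rho,\eta)$ over all fractional partitions with $\|\rho\|,\|\eta\|\ne 0$. *)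

(* Defs.v *)
From Stdlib Require Import Reals List.
Import ListNotations.
Open Scope R_scope.

(* Vertex set V = [n] = {1,...,n}, represented by natural numbers 1..n.
   Functions on V are functions nat -> R (resp. nat -> nat -> R); only
   their values on [n] matter. *)
Definition inV (n : nat) (v : nat) : Prop := (1 <= v <= n)%nat.

Definition sumV (n : nat) (f : nat -> R) : R :=
  fold_right Rplus 0 (map f (seq 1 n)).

Definition weighted_graph (n : nat) (w : nat -> nat -> R) : Prop :=
  (forall u v, inV n u -> inV n v -> 0 <= w u v <= 1) /\
  (forall u v, inV n u -> inV n v -> w u v = w v u).

Definition vol (n : nat) (w : nat -> nat -> R) (v : nat) : R :=
  sumV n (fun u => w u v).

Definition volG (n : nat) (w : nat -> nat -> R) : R :=
  sumV n (fun v => vol n w v).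

Definition connected (n : nat) (w : nat -> nat -> R) : Prop :=
  forall S : nat -> Prop,
    (exists u, inV n u /\ S u) ->
    (exists v, inV n v /\ ~ S v) ->
    exists u v, inV n u /\ S u /\ inV n v /\ ~ S v /\ 0 < w u v.

Definition frac_partition (n : nat) (rho eta : nat -> R) : Prop :=
  forall u, inV n u -> 0 <= rho u <= 1 /\ 0 <= eta u <= 1 /\ rho u + eta u = 1.

Definition fnorm (n : nat) (w : nat -> nat -> R) (rho : nat -> R) : R :=
  sumV n (fun u => rho u * vol n w u).

Definition admissible (n : nat) (w : nat -> nat -> R) (rho eta : nat -> R) : Prop :=
  frac_partition n rho eta /\ fnorm n w rho <> 0 /\ fnorm n w eta <> 0.

Definition htilde (n : nat) (w : nat -> nat -> R) (rho eta : nat -> R) : R :=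
  sumV n (fun u => sumV n (fun v => rho u * eta v * w u v))
  / Rmin (fnorm n w rho) (fnorm n w eta).

Definition htilde_values (n : nat) (w : nat -> nat -> R) : R -> Prop :=
  fun x => exists rho eta, admissible n w rho eta /\ x = htilde n w rho eta.

Definition is_lower_bound (E : R -> Prop) (m : R) : Prop :=
  forall x, E x -> m <= x.
Definition is_glb (E : R -> Prop) (m : R) : Prop :=
  is_lower_bound E m /\ (forall b, is_lower_bound E b -> b <= m).
Definition is_frac_cheeger (n : nat) (w : nat -> nat -> R) (x : R) : Prop :=
  is_glb (htilde_values n w) x.

(* Main.v *)
Require Import Defs.
From Stdlib Require Import Reals List Lia Lra.
Open Scope R_scope.

Definition sumL (l : list nat) (f : nat -> R) : R := fold_right Rplus 0 (map f l).

Lemma sumL_ext l f g : (forall x, In x l -> f x = g x) -> sumL l f = sumL l g.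
Proof.
  induction l as [|a l IH]; intros H; simpl; [reflexivity|].
  unfold sumL in *; simpl. rewrite H by (left; auto). rewrite IH; auto.
  intros x Hx; apply H; right; auto.
Qed.

Lemma sumL_plus l f g : sumL l (fun x => f x + g x) = sumL l f + sumL l g.
Proof. induction l as [|a l IH]; unfold sumL in *; simpl; [lra|]. rewrite IH; lra. Qed.

Lemma sumL_minus l f g : sumL l (fun x => f x - g x) = sumL l f - sumL l g.
Proof. induction l as [|a l IH]; unfold sumL in *; simpl; [lra|]. rewrite IH; lra. Qed.

Lemma sumL_scal l a f : sumL l (fun x => a * f x) = a * sumL l f.
Proof. induction l as [|b l IH]; unfold sumL in *; simpl; [lra|]. rewrite IH; lra. Qed.

Lemma sumL_le l f g : (forall x, In x l -> f x <= g x) -> sumL l f <= sumL l g.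
Proof.
  induction l as [|a l IH]; intros H; unfold sumL in *; simpl; [lra|].
  assert (f a <= g a) by (apply H; left; auto).
  assert (fold_right Rplus 0 (map f l) <= fold_right Rplus 0 (map g l))
    by (apply IH; intros; apply H; right; auto). lra.
Qed.

Lemma sumL_nonneg l f : (forall x, In x l -> 0 <= f x) -> 0 <= sumL l f.
Proof.
  intros H. replace 0 with (sumL l (fun _ => 0)).
  - apply sumL_le; auto.
  - induction l; unfold sumL in *; simpl; auto; rewrite IHl; [lra|]; intros; apply H; right; auto.
Qed.

Lemma sumL_term l f y : (forall x, In x l -> 0 <= f x) -> In y l -> f y <= sumL l f.
Proof.
  induction l as [|a l IH]; intros H Hy; [destruct Hy|].
  unfold sumL in *; simpl.
  assert (0 <= f a) by (apply H; left; auto).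
  assert (0 <= fold_right Rplus 0 (map f l))
    by (apply (sumL_nonneg l f); intros; apply H; right; auto).
  destruct Hy as [<-|Hy]; [lra|].
  assert (f y <= fold_right Rplus 0 (map f l)) by (apply IH; auto; intros; apply H; right; auto).
  lra.
Qed.

Lemma sumL_swap l l' (F : nat -> nat -> R) :
  sumL l (fun u => sumL l' (fun v => F u v)) = sumL l' (fun v => sumL l (fun u => F u v)).
Proof.
  induction l as [|a l IH].
  - unfold sumL; simpl. induction l'; simpl; auto. rewrite <- IHl'; lra.
  - change (sumL (a :: l) (fun u => sumL l' (fun v => F u v)))
      with (sumL l' (fun v => F a v) + sumL l (fun u => sumL l' (fun v => F u v))).
    rewrite IH. rewrite <- sumL_plus. reflexivity.
Qed.

Lemma inV_In n v : inV n v <-> In v (seq 1 n).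
Proof. rewrite in_seq; unfold inV; lia. Qed.

Section G.
Variable n : nat.
Variable w : nat -> nat -> R.
Hypothesis WG : weighted_graph n w.

Lemma sumV_ext f g : (forall x, inV n x -> f x = g x) -> sumV n f = sumV n g.
Proof. intros H; apply (sumL_ext (seq 1 n)); intros; apply H; apply inV_In; auto. Qed.
Lemma sumV_le f g : (forall x, inV n x -> f x <= g x) -> sumV n f <= sumV n g.
Proof. intros H; apply (sumL_le (seq 1 n)); intros; apply H; apply inV_In; auto. Qed.
Lemma sumV_nonneg f : (forall x, inV n x -> 0 <= f x) -> 0 <= sumV n f.
Proof. intros H; apply (sumL_nonneg (seq 1 n)); intros; apply H; apply inV_In; auto. Qed.
Lemma sumV_term f y : (forall x, inV n x -> 0 <= f x) -> inV n y -> f y <= sumV n f.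
Proof. intros H Hy; apply (sumL_term (seq 1 n)); [intros; apply H; apply inV_In; auto| apply inV_In; auto]. Qed.
Lemma sumV_plus f g : sumV n (fun x => f x + g x) = sumV n f + sumV n g.
Proof. apply sumL_plus. Qed.
Lemma sumV_minus f g : sumV n (fun x => f x - g x) = sumV n f - sumV n g.
Proof. apply sumL_minus. Qed.
Lemma sumV_scal a f : sumV n (fun x => a * f x) = a * sumV n f.
Proof. apply sumL_scal. Qed.
Lemma sumV_swap (F : nat -> nat -> R) :
  sumV n (fun u => sumV n (fun v => F u v)) = sumV n (fun v => sumV n (fun u => F u v)).
Proof. apply sumL_swap. Qed.

Lemma w_nonneg u v : inV n u -> inV n v -> 0 <= w u v.
Proof. intros; destruct WG as [Hw _]; apply Hw; auto. Qed.
Lemma w_sym u v : inV n u -> inV n v -> w u v = w v u.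
Proof. intros; destruct WG as [_ Hw]; apply Hw; auto. Qed.

Lemma vol_nonneg u : inV n u -> 0 <= vol n w u.
Proof. intros; unfold vol; apply sumV_nonneg; intros; apply w_nonneg; auto. Qed.
Lemma w_le_vol_r u v : inV n u -> inV n v -> w u v <= vol n w v.
Proof. intros; unfold vol; apply (sumV_term (fun x => w x v)); auto; intros; apply w_nonneg; auto. Qed.
Lemma w_le_vol_l u v : inV n u -> inV n v -> w u v <= vol n w u.
Proof. intros; rewrite w_sym; auto; apply w_le_vol_r; auto. Qed.
Lemma vol_alt u : inV n u -> sumV n (fun v => w u v) = vol n w u.
Proof. intros; unfold vol; apply sumV_ext; intros; apply w_sym; auto. Qed.

Definition Pw (a b : nat -> R) : R := sumV n (fun u => sumV n (fun v => a u * b v * w u v)).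

Lemma Pw_sym a b : Pw a b = Pw b a.
Proof.
  unfold Pw; rewrite sumV_swap. apply sumV_ext; intros v Hv; apply sumV_ext; intros u Hu.
  rewrite w_sym; auto; ring.
Qed.

Lemma Pw_split a b : (forall u, inV n u -> a u + b u = 1) -> Pw a b = fnorm n w a - Pw a a.
Proof.
  intros H. unfold Pw, fnorm. rewrite <- sumV_minus. apply sumV_ext; intros u Hu.
  rewrite <- (vol_alt u Hu). rewrite <- sumV_scal, <- sumV_minus.
  apply sumV_ext; intros v Hv. replace (b v) with (1 - a v) by (specialize (H v Hv); lra). ring.
Qed.

Definition Kc : R := 1 + sumV n (fun x => sumV n (fun y => w x y * / (vol n w x * vol n w y))).

Lemma Kc_terms_nonneg x y : inV n x -> inV n y -> 0 <= w x y * / (vol n w x * vol n w y).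
Proof.
  intros Hx Hy. pose proof (vol_nonneg x Hx); pose proof (vol_nonneg y Hy).
  pose proof (w_nonneg x y Hx Hy).
  destruct (Req_dec (vol n w x * vol n w y) 0) as [E|E].
  - rewrite E, Rinv_0; lra.
  - apply Rmult_le_pos; auto. left; apply Rinv_0_lt_compat.
    assert (0 <= vol n w x * vol n w y) by (apply Rmult_le_pos; auto). lra.
Qed.

Lemma Kc_pos : 0 < Kc.
Proof.
  unfold Kc. assert (0 <= sumV n (fun x => sumV n (fun y => w x y * / (vol n w x * vol n w y)))); [|lra].
  apply sumV_nonneg; intros; apply sumV_nonneg; intros; apply Kc_terms_nonneg; auto.
Qed.

Lemma w_le_K u v : inV n u -> inV n v -> w u v <= Kc * vol n w u * vol n w v.
Proof.
  intros Hu Hv. pose proof (vol_nonneg u Hu); pose proof (vol_nonneg v Hv).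
  pose proof (w_le_vol_l u v Hu Hv); pose proof (w_le_vol_r u v Hu Hv).
  pose proof Kc_pos.
  destruct (Req_dec (vol n w u) 0) as [E|E].
  { rewrite E in *. nra. }
  destruct (Req_dec (vol n w v) 0) as [E'|E'].
  { rewrite E' in *. nra. }
  assert (P : 0 < vol n w u * vol n w v) by (apply Rmult_lt_0_compat; lra).
  assert (T : w u v * / (vol n w u * vol n w v) <= Kc - 1).
  { unfold Kc. replace (1 + _ - 1) with (sumV n (fun x => sumV n (fun y => w x y * / (vol n w x * vol n w y)))) by ring.
    eapply Rle_trans; [| apply (sumV_term (fun x => sumV n (fun y => w x y * / (vol n w x * vol n w y))) u)]; auto.
    - apply (sumV_term (fun y => w u y * / (vol n w u * vol n w y))); auto.
      intros; apply Kc_terms_nonneg; auto.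
    - intros; apply sumV_nonneg; intros; apply Kc_terms_nonneg; auto. }
  replace (w u v) with (w u v * / (vol n w u * vol n w v) * (vol n w u * vol n w v)) by (field; lra).
  nra.
Qed.

Lemma fnorm_nonneg a : (forall u, inV n u -> 0 <= a u) -> 0 <= fnorm n w a.
Proof. intros H; unfold fnorm; apply sumV_nonneg; intros; apply Rmult_le_pos; auto; apply vol_nonneg; auto. Qed.

Lemma Pw_self_bound a : (forall u, inV n u -> 0 <= a u) -> Pw a a <= Kc * fnorm n w a * fnorm n w a.
Proof.
  intros H. unfold Pw.
  apply Rle_trans with (sumV n (fun u => (Kc * (a u * vol n w u)) * fnorm n w a)).
  - apply sumV_le; intros u Hu. unfold fnorm. rewrite <- sumV_scal.
    apply sumV_le; intros v Hv. pose proof (w_le_K u v Hu Hv).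
    assert (0 <= a u * a v) by (apply Rmult_le_pos; auto). nra.
  - rewrite (sumV_ext _ (fun u => (Kc * fnorm n w a) * (a u * vol n w u))) by (intros; ring).
    rewrite sumV_scal. unfold fnorm at 3. lra.
Qed.

Lemma fnorm_sum a b : (forall u, inV n u -> a u + b u = 1) -> fnorm n w a + fnorm n w b = volG n w.
Proof.
  intros H; unfold fnorm, volG; rewrite <- sumV_plus; apply sumV_ext; intros u Hu.
  specialize (H u Hu). replace (vol n w u) with ((a u + b u) * vol n w u) at 3 by (rewrite H; ring). ring.
Qed.

Lemma fnorm_ext a b : (forall u, inV n u -> a u = b u) -> fnorm n w a = fnorm n w b.
Proof. intros H; unfold fnorm; apply sumV_ext; intros; rewrite H; auto. Qed.
Lemma Pw_ext a b a' b' : (forall u, inV n u -> a u = a' u) -> (forall u, inV n u -> b u = b' u) -> Pw a b = Pw a' b'.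
Proof. intros H H'; unfold Pw; apply sumV_ext; intros; apply sumV_ext; intros; rewrite H, H'; auto. Qed.

Lemma key_lb f : (forall u, inV n u -> 0 <= f u <= 1) ->
  0 < fnorm n w f -> 0 < fnorm n w (fun u => 1 - f u) ->
  1 - Kc * Rmin (fnorm n w f) (fnorm n w (fun u => 1 - f u)) <=
  Pw f (fun u => 1 - f u) / Rmin (fnorm n w f) (fnorm n w (fun u => 1 - f u)).
Proof.
  intros Hf HA HB.
  set (g := fun u => 1 - f u) in *.
  assert (E1 : Pw f g = fnorm n w f - Pw f f) by (apply Pw_split; intros; unfold g; ring).
  assert (E2 : Pw f g = fnorm n w g - Pw g g) by (rewrite Pw_sym; apply Pw_split; intros; unfold g; ring).
  assert (B1 : Pw f f <= Kc * fnorm n w f * fnorm n w f) by (apply Pw_self_bound; intros u Hu; destruct (Hf u Hu); lra).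
  assert (B2 : Pw g g <= Kc * fnorm n w g * fnorm n w g) by (apply Pw_self_bound; intros u Hu; destruct (Hf u Hu); unfold g; lra).
  unfold Rmin; destruct (Rle_dec (fnorm n w f) (fnorm n w g)).
  - replace (1 - Kc * fnorm n w f) with ((fnorm n w f - Kc * fnorm n w f * fnorm n w f) / fnorm n w f) by (field; lra).
    unfold Rdiv; apply Rmult_le_compat_r; [left; apply Rinv_0_lt_compat; lra| lra].
  - replace (1 - Kc * fnorm n w g) with ((fnorm n w g - Kc * fnorm n w g * fnorm n w g) / fnorm n w g) by (field; lra).
    unfold Rdiv; apply Rmult_le_compat_r; [left; apply Rinv_0_lt_compat; lra| lra].
Qed.

End G.

From mathcomp Require Import all_boot all_order all_algebra.
From mathcomp Require Import all_classical all_reals all_analysis.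
From mathcomp Require Import Rstruct Rstruct_topology.
Import Order.TTheory GRing.Theory Num.Theory.
Import numFieldNormedType.Exports.
Import ArrowAsProduct.
Local Open Scope classical_set_scope.
Lemma cont_plus (f g : (nat -> R) -> R) : continuous f -> continuous g ->
  continuous (fun x => Rplus (f x) (g x)).
Proof. move=> cf cg x. exact: (@cvgD _ R^o _ (nbhs x) _ f g (f x) (g x) (cf x) (cg x)). Qed.
Lemma cont_mult (f g : (nat -> R) -> R) : continuous f -> continuous g ->
  continuous (fun x => Rmult (f x) (g x)).
Proof. move=> cf cg x. exact: (@cvgM _ _ (nbhs x) _ f g (f x) (g x) (cf x) (cg x)). Qed.
Lemma cont_opp (f : (nat -> R) -> R) : continuous f ->
  continuous (fun x => Ropp (f x)).
Proof. move=> cf x; exact: (@cvgN _ R^o _ (nbhs x) _ f (f x) (cf x)). Qed.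
Lemma cont_cst (a : R) : continuous (fun _ : nat -> R => a).
Proof. exact: cst_continuous. Qed.
Lemma cont_proj i : continuous (fun f : nat -> R => f i).
Proof. exact: (@proj_continuous nat (fun _ => R) i). Qed.
Lemma cont_abs (f : (nat -> R) -> R) : continuous f ->
  continuous (fun x => Rabs (f x)).
Proof. move=> cf x. apply: continuous_comp; [exact: cf| exact: (@norm_continuous _ R^o)]. Qed.
Lemma cont_inv (f : (nat -> R) -> R) : continuous f -> (forall x, f x <> 0%R) ->
  continuous (fun x => Rinv (f x)).
Proof. move=> cf nz x; apply: (@cvgV _ _ (nbhs x) _ f (f x)); [apply/eqP; exact: nz| exact: cf]. Qed.
Definition cube (f : nat -> R) : Prop := forall i, Rle 0 (f i) /\ Rle (f i) 1.
Lemma exists_min (G P : (nat -> R) -> R) (c : R) :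
  continuous G -> continuous P -> (exists f0, cube f0 /\ Rle c (P f0)) ->
  exists f0, cube f0 /\ Rle c (P f0) /\
    forall f, cube f -> Rle c (P f) -> Rle (G f0) (G f).
Proof.
move=> cG cP [g [cg Pg]].
pose S : set (nat -> R) := [set f : nat -> R | forall i, `[0%R, 1%R] (f i)] `&` (P @^-1` [set x | c <= x]%R).
have cS : compact S.
  rewrite /S; apply: (@compact_closedI (nat -> R)).
    exact: (@tychonoff nat (fun _ => R) (fun _ => `[0%R, 1%R]%classic) (fun i => @segment_compact R 0%R 1%R)).
  apply: preimage_closed; [by move=> x _; exact: cP| exact: closed_ge].
have S0 : S !=set0.
  exists g; split => /=.
    move=> i /=; rewrite in_itv /=; case: (cg i) => h1 h2; apply/andP; split; exact/RleP.
  exact/RleP.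
have [f0 f0S minf] := compact_EVT_min S0 cS (continuous_subspaceT cG).
move: f0S; rewrite inE => -[/= Cf0 Pf0].
exists f0; split; [|split].
- move=> i; move: (Cf0 i); rewrite /= in_itv /= => /andP[/RleP ? /RleP ?]; by split.
- exact/RleP.
- move=> f cf Pf; apply/RleP; apply: minf; rewrite inE; split => /=.
    move=> i /=; rewrite in_itv /=; case: (cf i) => h1 h2; apply/andP; split; exact/RleP.
  exact/RleP.
Qed.

Arguments cont_plus {f g}.
Arguments cont_mult {f g}.
Arguments cont_opp {f}.
Arguments cont_abs {f}.
Arguments cont_inv {f}.

Lemma cont_sumL l (F : nat -> (nat -> R) -> R) : (forall u, continuous (F u)) ->
  continuous (fun f => sumL l (fun u => F u f)).
Proof.
  move=> H; elim: l => [|a l IH]; first exact: cont_cst.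
  change (continuous (fun f => Rplus (F a f) (sumL l (fun u => F u f)))).
  have := cont_plus (H a) IH. exact.
Qed.

Lemma cont_fnorm n w : continuous (fun f => fnorm n w f).
Proof. exact: (cont_sumL (List.seq 1 n) (fun u f => Rmult (f u) (vol n w u)) (fun u => cont_mult (cont_proj u) (cont_cst _))). Qed.

Lemma cont_1m u : continuous (fun f : nat -> R => Rminus 1 (f u)).
Proof. exact: (cont_plus (cont_cst 1) (cont_opp (cont_proj u))). Qed.

Lemma cont_fnormB n w : continuous (fun f => fnorm n w (fun u => Rminus 1 (f u))).
Proof. exact: (cont_sumL (List.seq 1 n) (fun u f => Rmult (Rminus 1 (f u)) (vol n w u)) (fun u => cont_mult (cont_1m u) (cont_cst _))). Qed.

Lemma cont_Pw n w : continuous (fun f => Pw n w f (fun u => Rminus 1 (f u))).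
Proof.
  apply: (cont_sumL (List.seq 1 n) (fun u f => sumL (List.seq 1 n) (fun v => Rmult (Rmult (f u) (Rminus 1 (f v))) (w u v)))).
  move=> u; apply: (cont_sumL (List.seq 1 n) (fun v f => Rmult (Rmult (f u) (Rminus 1 (f v))) (w u v))).
  move=> v; exact: (cont_mult (cont_mult (cont_proj u) (cont_1m v)) (cont_cst _)).
Qed.

Import Defs.
Open Scope R_scope.

Definition Af n w (f : nat -> R) : R := fnorm n w f.
Definition Bf n w (f : nat -> R) : R := fnorm n w (fun u => Rminus 1 (f u)).
Definition Nf n w (f : nat -> R) : R := Pw n w f (fun u => Rminus 1 (f u)).
Definition Mf n w (f : nat -> R) : R :=
  (Af n w f + Bf n w f + - Rabs (Af n w f + - Bf n w f)) * / 2.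
Definition Df n w (c : R) (f : nat -> R) : R := (c + Mf n w f + Rabs (c + - Mf n w f)) * / 2.
Definition Gf n w c (f : nat -> R) : R := Nf n w f * / Df n w c f.

Lemma Mf_eq n w f : Mf n w f = Rmin (Af n w f) (Bf n w f).
Proof. unfold Mf, Rmin; destruct (Rle_dec _ _); unfold Rabs; destruct (Rcase_abs _); lra. Qed.
Lemma Df_ge n w c f : c <= Df n w c f.
Proof. unfold Df; unfold Rabs; destruct (Rcase_abs _); lra. Qed.
Lemma Df_eq n w c f : c <= Mf n w f -> Df n w c f = Mf n w f.
Proof. intros; unfold Df; unfold Rabs; destruct (Rcase_abs _); lra. Qed.

Lemma cont_Mf n w : continuous (Mf n w).
Proof.
  have cA := cont_fnorm n w. have cB := cont_fnormB n w.
  exact: (cont_mult (cont_plus (cont_plus cA cB) (cont_opp (cont_abs (cont_plus cA (cont_opp cB))))) (cont_cst (/2))).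
Qed.

Lemma cont_Gf n w c : 0 < c -> continuous (Gf n w c).
Proof.
  move=> c0.
  have cM := cont_Mf n w.
  have cD : continuous (Df n w c).
    exact: (cont_mult (cont_plus (cont_plus (cont_cst c) cM) (cont_abs (cont_plus (cont_cst c) (cont_opp cM)))) (cont_cst (/2))).
  apply: (cont_mult (cont_Pw n w) (cont_inv cD _)).
  move=> f; have H := Df_ge n w c f. have H2 : Df n w c f <> 0 by lra. exact: H2.
Qed.

Definition clip n (r : nat -> R) : nat -> R :=
  fun i => if andb (Nat.leb 1 i) (Nat.leb i n) then r i else 0.

Lemma clip_in n r i : inV n i -> clip n r i = r i.
Proof.
  unfold inV, clip; intros [H1 H2].
  apply Nat.leb_le in H1. apply Nat.leb_le in H2. rewrite H1 H2. reflexivity.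
Qed.

Theorem mainTheorem10 (n : nat) (w : nat -> nat -> R) :
  weighted_graph n w ->
  connected n w ->
  0 < volG n w ->
  exists rho eta,
    admissible n w rho eta /\ is_frac_cheeger n w (htilde n w rho eta).
Proof.
  intros WG _ Hvol.
  pose (K := Kc n w). have K0 : 0 < K := Kc_pos n w WG.
  pose (c := Rmin (/ (4 * K)) (volG n w / 2)).
  have c0 : 0 < c.
  { unfold c, Rmin; destruct (Rle_dec _ _); [apply Rinv_0_lt_compat; lra| lra]. }
  have cle1 : c <= / (4 * K) by apply Rmin_l.
  have cle2 : c <= volG n w / 2 by apply Rmin_r.
  pose (hf := fun _ : nat => / 2).
  have hcube : cube hf by move=> i; unfold hf; split; lra.
  have hA : Af n w hf = volG n w / 2.
  { unfold Af, fnorm, hf, volG. rewrite (sumV_scal n (/2) (fun u => vol n w u)). unfold Rdiv; ring. }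
  have hB : Bf n w hf = volG n w / 2.
  { unfold Bf. rewrite -hA. unfold Af. apply: fnorm_ext => u _. unfold hf. field. }
  have hM : Mf n w hf = volG n w / 2 by rewrite Mf_eq hA hB Rmin_left; lra.
  have hN : Nf n w hf = volG n w / 4.
  { unfold Nf. have Hs : forall u, inV n u -> hf u + Rminus 1 (hf u) = 1 by intros; ring.
    have E := Pw_split n w WG hf (fun u => Rminus 1 (hf u)) Hs.
    have E2 : Pw n w hf hf = Pw n w hf (fun u => Rminus 1 (hf u))
      by apply: Pw_ext => u _ //; unfold hf; field.
    rewrite -E2 in E. fold (Af n w hf) in E. rewrite hA in E. lra. }
  have hG : Gf n w c hf = / 2.
  { unfold Gf. rewrite Df_eq hM ?hN; [field; lra| lra]. }
  have hc : c <= Mf n w hf by lra.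
  have [f0 [Cf0 [Mf0 Hmin]]] :=
    exists_min (Gf n w c) (Mf n w) c (cont_Gf n w c c0) (cont_Mf n w) (ex_intro _ hf (conj hcube hc)).
  have G0 : Gf n w c f0 <= / 2 by rewrite -hG; apply Hmin => //; lra.
  rewrite Mf_eq in Mf0.
  have A0 : 0 < Af n w f0 by have := Rmin_l (Af n w f0) (Bf n w f0); lra.
  have B0 : 0 < Bf n w f0 by have := Rmin_r (Af n w f0) (Bf n w f0); lra.
  have Hval : htilde n w f0 (fun u => Rminus 1 (f0 u)) = Gf n w c f0.
  { unfold Gf. rewrite Df_eq Mf_eq //. }
  exists f0, (fun u => Rminus 1 (f0 u)).
  split.
  { split; [|split].
    - move=> u _; have [? ?] := Cf0 u; lra.
    - fold (Af n w f0); lra.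
    - fold (Bf n w f0); lra. }
  rewrite Hval. split.
  - move=> x [rho [eta [[Hfp [HA HB]] ->]]].
    pose (r := clip n rho).
    have Cr : cube r.
    { move=> i; unfold r, clip.
      destruct (Nat.leb_spec 1 i); destruct (Nat.leb_spec i n); simpl; try lra.
      assert (Hi : inV n i) by (unfold inV; lia).
      destruct (Hfp i Hi) as [[? ?] _]; lra. }
    have rA : fnorm n w rho = Af n w r by apply: fnorm_ext => u Hu; rewrite /r clip_in.
    have rB : fnorm n w eta = Bf n w r.
    { apply: fnorm_ext => u Hu; unfold r; rewrite clip_in //; have := Hfp u Hu; lra. }
    have rN : sumV n (fun u => sumV n (fun v => rho u * eta v * w u v)) = Nf n w r.
    { apply: Pw_ext => u Hu; unfold r; rewrite clip_in //; have := Hfp u Hu; lra. }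
    unfold htilde. rewrite rA rB rN.
    have Ar : 0 <= Af n w r by apply: fnorm_nonneg => // u Hu; have [? ?] := Cr u.
    have Br : 0 <= Bf n w r by apply: fnorm_nonneg => // u Hu; have [? ?] := Cr u; lra.
    rewrite -rA in Ar HA; rewrite -rB in Br HB.
    have Ar' : 0 < Af n w r by rewrite -rA; lra.
    have Br' : 0 < Bf n w r by rewrite -rB; lra.
    destruct (Rle_dec c (Mf n w r)) as [Hc|Hc].
    + have := Hmin r Cr Hc. unfold Gf. rewrite (Df_eq _ _ _ _ Hc) Mf_eq. lra.
    + rewrite Mf_eq in Hc.
      have L := key_lb n w WG r (fun u _ => Cr u) Ar' Br'.
      fold (Bf n w r) in L. fold (Nf n w r) in L. fold (Af n w r) in L.
      set m := Rmin (Af n w r) (Bf n w r) in Hc L *.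
      have Km : K * m <= / 4.
      { have : K * m <= K * / (4 * K) by apply: Rmult_le_compat_l; lra.
        have -> : K * / (4 * K) = / 4 by field; lra. done. }
      fold K in L. unfold Rdiv in L. lra.
  - move=> b Hb. apply: Hb. exists f0, (fun u => Rminus 1 (f0 u)). split; last by rewrite Hval.
    split; [|split].
    + move=> u _; have [? ?] := Cf0 u; lra.
    + fold (Af n w f0); lra.
    + fold (Bf n w f0); lra.
Qed.
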